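(* Let $1\le k\le N$ and let $\varphi(z)=\frac{Az+B}{\langle z,C\rangle+d}$ be a linear fractional self-map of $B_N$, with adjoint map $\sigma(z)=\frac{A^*z-C}{\langle z,-B\rangle+\overline{d}}$. If $\varphi$ maps $B_k=\{(z_1,\dots,z_N)\in B_N: z_i=0\text{ for } i>k\}$ into itself and the restriction of $\varphi$ to $B_k$ is an automorphism of $B_k$, then the first $k$ coordinate functions of $\varphi$ and of $\sigma$ depend only on the variables $z_1,\dots,z_k$.
   Context: $B_N$ is the open unit ball of $\mathbb{C}^N$, $\langle z,w\rangle=\sum_j z_j\overline{w_j}$, $A$ is an $N\times N$ complex matrix with conjugate transpose $A^*$, $B,C\in\mathbb{C}^N$, $d\in\mathbb{C}$. $B_k$ is identified with the unit ball of $\mathbb{C}^k$. *)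

(* Defs.v *)
From HB Require Import structures.
From mathcomp Require Import all_boot all_order all_algebra.
From mathcomp Require Import complex.
From mathcomp Require Import reals.
Set Implicit Arguments. Unset Strict Implicit. Unset Printing Implicit Defensive.
Import Order.TTheory GRing.Theory Num.Theory.
Local Open Scope ring_scope.

(* Complex numbers are R[i] for a model R of the real numbers (realType).
   Points of C^N are column vectors 'cV[R[i]]_N; coordinate j is z j ord0
   (0-indexed: the paper's z_{j+1}). *)

Section Defs.
Variable R : realType.
Local Notation C := R[i].

Definition inner (N : nat) (z w : 'cV[C]_N) : C :=
  \sum_(j < N) z j ord0 * conjc (w j ord0).

Definition ballN (N : nat) (z : 'cV[C]_N) : Prop :=
  \sum_(j < N) `|z j ord0| ^+ 2 < 1.

Definition ballk (N k : nat) (z : 'cV[C]_N) : Prop :=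
  ballN z /\ forall i : 'I_N, (k <= i)%N -> z i ord0 = 0.

Definition adjmx (N : nat) (A : 'M[C]_N) : 'M[C]_N := (map_mx conjc A)^T.

Definition lfmap (N : nat) (A : 'M[C]_N) (B C' : 'cV[C]_N) (d : C)
  (z : 'cV[C]_N) : 'cV[C]_N :=
  (inner z C' + d)^-1 *: (A *m z + B).

Definition lfadj (N : nat) (A : 'M[C]_N) (B C' : 'cV[C]_N) (d : C) :
  'cV[C]_N -> 'cV[C]_N :=
  lfmap (adjmx A) (- C') (- B) (conjc d).

Definition lf_selfmap (N : nat) (A : 'M[C]_N) (B C' : 'cV[C]_N) (d : C) : Prop :=
  forall z, ballN z -> inner z C' + d != 0 /\ ballN (lfmap A B C' d z).

(* f restricted to B_k is an automorphism of B_k (a bijection of B_k onto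
   itself; holomorphy of it and of its inverse is automatic here) *)
Definition restr_aut (N k : nat) (f : 'cV[C]_N -> 'cV[C]_N) : Prop :=
  (forall z, ballk k z -> ballk k (f z)) /\
  (forall z w, ballk k z -> ballk k w -> f z = f w -> z = w) /\
  (forall w, ballk k w -> exists2 z, ballk k z & f z = w).

Definition first_coords_dep (N k : nat) (f : 'cV[C]_N -> 'cV[C]_N) : Prop :=
  forall z w, ballN z -> ballN w ->
    (forall j : 'I_N, (j < k)%N -> z j ord0 = w j ord0) ->
    forall i : 'I_N, (i < k)%N -> f z i ord0 = f w i ord0.

End Defs.

(* Main.v *)
Require Import Defs.
From HB Require Import structures.
From mathcomp Require Import all_boot all_order all_algebra.
From mathcomp Require Import complex.
From mathcomp Require Import reals.
From mathcomp Require Import ring lra.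
Import Order.TTheory GRing.Theory Num.Theory.
Local Open Scope ring_scope.
Local Open Scope complex_scope.

Section A. Variable R : realType. Local Notation C := R[i].
Definition nsq (z : C) : R := complex.Re z ^+ 2 + complex.Im z ^+ 2.
Lemma nsqE (z : C) : `|z| ^+ 2 = (nsq z)%:C. Proof. by rewrite -add_Re2_Im2. Qed.
Lemma sum_nsqE (I : finType) (P : pred I) (F : I -> C) :
  \sum_(i | P i) `|F i| ^+ 2 = (\sum_(i | P i) nsq (F i))%:C.
Proof. rewrite (@rmorph_sum _ _ (real_complex R)). by apply: eq_bigr => i _; rewrite nsqE. Qed.
Lemma nsq_expand (a b c : C) (t : R) :
  nsq (a + t%:C * b + (t^+2)%:C * c) = nsq a + 2 * t * (complex.Re a * complex.Re b + complex.Im a * complex.Im b)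
   + t^+2 * ((complex.Re b + t * complex.Re c)^+2 + (complex.Im b + t * complex.Im c)^+2 + 2 * (complex.Re a * complex.Re c + complex.Im a * complex.Im c)).
Proof. case: a b c => [a1 a2] [b1 b2] [c1 c2]; rewrite /nsq /=. ring. Qed.
Lemma fo (P0 L M : R) (G : R -> R) : P0 <= 0 -> 0 <= M ->
  (forall t, 0 < `|t| < 1 -> 0 < G t) ->
  (forall t, `|t| < 1 -> G t <= P0 + 2 * L * t + t^+2 * M) -> L = 0.
Proof.
move=> hP hM hpos hub; apply/eqP/negPn/negP => hL.
have hD : 0 < M + `|L| + 1 by have := normr_ge0 L; lra.
set t := - L / (M + `|L| + 1).
have hLpos : 0 < `|L| by rewrite normr_gt0.
have ht : `|t| = `|L| / (M + `|L| + 1).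
  by rewrite /t normrM normrN normfV (gtr0_norm hD).
have ht1 : `|t| < 1 by rewrite ht ltr_pdivrMr //; lra.
have ht0 : 0 < `|t| by rewrite ht divr_gt0.
have := hpos t; rewrite ht0 ht1 => /(_ isT) h1.
have := hub t ht1 => h2.
have e : 2 * L * t + t^+2 * M = L^+2 / (M + `|L| + 1)^+2 * (- M - 2 * `|L| - 2).
  rewrite /t; field; lra.
have hq : 0 < L^+2 / (M + `|L| + 1)^+2.
  apply: divr_gt0; last exact: exprn_gt0. by rewrite lt0r sqrf_eq0 hL sqr_ge0.
have : L^+2 / (M + `|L| + 1)^+2 * (- M - 2 * `|L| - 2) < 0.
  by rewrite pmulr_rlt0 //; lra.
lra.
Qed.
Lemma Qbound (a1 a2 b1 b2 c1 c2 t : R) : t^+2 <= 1 ->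
  let Q := (b1 + t * c1)^+2 + (b2 + t * c2)^+2 + 2 * (a1 * c1 + a2 * c2) in
  let K := 2 * (b1^+2 + c1^+2 + b2^+2 + c2^+2) + (a1^+2 + c1^+2 + a2^+2 + c2^+2) in
  - K <= Q /\ Q <= K.
Proof.
move=> ht Q K; rewrite /Q /K.
have h1 : (b1 + t * c1)^+2 <= 2 * (b1^+2 + c1^+2).
  have := sqr_ge0 (b1 - t * c1); have : 0 <= c1^+2 * (1 - t^+2) by rewrite mulr_ge0 ?sqr_ge0 // subr_ge0.
  nra.
have h2 : (b2 + t * c2)^+2 <= 2 * (b2^+2 + c2^+2).
  have := sqr_ge0 (b2 - t * c2); have : 0 <= c2^+2 * (1 - t^+2) by rewrite mulr_ge0 ?sqr_ge0 // subr_ge0.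
  nra.
have h3 : 2 * (a1 * c1 + a2 * c2) <= a1^+2 + c1^+2 + a2^+2 + c2^+2.
  have := sqr_ge0 (a1 - c1); have := sqr_ge0 (a2 - c2); nra.
have h4 : -(a1^+2 + c1^+2 + a2^+2 + c2^+2) <= 2 * (a1 * c1 + a2 * c2).
  have := sqr_ge0 (a1 + c1); have := sqr_ge0 (a2 + c2); nra.
have h5 : 0 <= (b1 + t * c1)^+2 + (b2 + t * c2)^+2 by rewrite addr_ge0 ?sqr_ge0.
split; lra.
Qed.
Lemma nsq_ge0 (z : R[i]) : 0 <= nsq z.
Proof. rewrite /nsq; nra. Qed.
End A.
Arguments nsq {R}.

Section M.
Variables (R : realType) (N k : nat) (A : 'M[R[i]]_N) (B Cv : 'cV[R[i]]_N) (d : R[i]).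
Hypotheses (hk : (1 <= k <= N)%N) (HS : lf_selfmap A B Cv d)
  (HA : restr_aut k (lfmap A B Cv d)).
Local Notation C := R[i].
Definition num (x : 'cV[C]_N) := A *m x + B.
Definition den (x : 'cV[C]_N) := inner x Cv + d.
Local Notation phi := (lfmap A B Cv d).
Definition PhiC x := `|den x| ^+ 2 - \sum_(p < N | (p < k)%N) `|num x p 0| ^+ 2.
Definition Phi x := nsq (den x) - \sum_(p < N | (p < k)%N) nsq (num x p 0).
Lemma PhiE x : (Phi x)%:C = PhiC x.
Proof. by rewrite /PhiC /Phi rmorphB /= sum_nsqE nsqE. Qed.
Lemma phiE x p : phi x p 0 = (den x)^-1 * num x p 0.
Proof. by rewrite /lfmap mxE. Qed.

Lemma F1 x : ballN x -> 0 < Phi x.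
Proof.
move=> bx; have [hd bp] := HS x bx.
rewrite -ltcR PhiE /PhiC subr_gt0.
move: bp; rewrite /ballN.
have hd2 : 0 < `|den x| ^+ 2 by rewrite exprn_gt0 // normr_gt0.
move=> h; rewrite -[X in _ < X]mul1r -ltr_pdivrMr //.
apply: le_lt_trans h.
rewrite mulr_suml big_mkcond /=; apply: ler_sum => p _.
rewrite phiE normrM normfV exprMn exprVn mulrC.
case: ifP => _ //; by rewrite mulr_ge0 // ?exprn_ge0 ?invr_ge0 ?exprn_ge0.
Qed.

Lemma innerD (x y : 'cV[C]_N) : inner (x + y) Cv = inner x Cv + inner y Cv.
Proof. rewrite /inner -big_split /=; apply: eq_bigr => j _; by rewrite mxE mulrDl. Qed.
Lemma innerZ (a : C) (x : 'cV[C]_N) : inner (a *: x) Cv = a * inner x Cv.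
Proof. rewrite /inner mulr_sumr; apply: eq_bigr => j _; by rewrite mxE mulrA. Qed.
Lemma innerN (x : 'cV[C]_N) : inner (- x) Cv = - inner x Cv.
Proof. by rewrite -scaleN1r innerZ mulN1r. Qed.
Lemma inner0 : inner 0 Cv = 0.
Proof. by rewrite -(scale0r (0 : 'cV[C]_N)) innerZ mul0r. Qed.
Lemma den0 : den 0 = d.
Proof. by rewrite /den inner0 add0r. Qed.
Lemma d_neq0 : d != 0.
Proof.
have b0 : ballN (0 : 'cV[C]_N).
  by rewrite /ballN big1 ?ltr01 // => j _; rewrite mxE normr0 expr0n.
by have [] := HS 0 b0; rewrite inner0 add0r.
Qed.
Lemma numE x p : num x p 0 = (A *m x) p 0 + B p 0.
Proof. by rewrite /num mxE. Qed.
Lemma nsqZ (t : R) (z : C) : nsq (t%:C * z) = t^+2 * nsq z.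
Proof. case: z => a b; rewrite /nsq /=; ring. Qed.
Lemma nsq0 : nsq (0 : C) = 0.
Proof. by rewrite /nsq /= expr0n /= addr0. Qed.
Lemma ballN_nsq (x : 'cV[C]_N) : ballN x <-> \sum_(j < N) nsq (x j 0) < 1.
Proof.
rewrite /ballN.
have -> : \sum_(j < N) `|x j 0| ^+ 2 = (\sum_(j < N) nsq (x j 0))%:C.
  by rewrite (@rmorph_sum _ _ (real_complex R)); apply: eq_bigr => j _; rewrite nsqE.
by rewrite ltcR.
Qed.

Lemma ballk0 : ballk k (0 : 'cV[C]_N).
Proof.
split; last by move=> l _; rewrite mxE.
by apply/ballN_nsq; rewrite big1 ?ltr01 // => j _; rewrite mxE nsq0.
Qed.

Lemma PhiA (x0 : 'cV[C]_N) : (forall l : 'I_N, (k <= l)%N -> x0 l 0 = 0) -> ~ ballN x0 ->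
  Phi x0 <= 0.
Proof.
move=> hx0 nb; rewrite leNgt; apply/negP => hP.
set D := den x0.
have hS0 : 0 <= \sum_(p < N | (p < k)%N) nsq (num x0 p 0) by apply: sumr_ge0 => p _; exact: nsq_ge0.
have hD : D != 0.
  apply/negP => /eqP hD0; move: hP; rewrite /Phi -/D hD0 nsq0; lra.
have hPC : 0 < PhiC x0 by rewrite -PhiE ltcR.
set q := \col_p (if (p < k)%N then num x0 p 0 / D else 0) : 'cV[C]_N.
have bq : ballk k q.
  split; last by move=> l hl; rewrite mxE ltnNge hl.
  rewrite /ballN.
  have hD2 : 0 < `|D| ^+ 2 by rewrite exprn_gt0 // normr_gt0.
  move: hPC; rewrite /PhiC -/D subr_gt0 -[X in _ < X]mul1r -ltr_pdivrMr //.
  apply: le_lt_trans; rewrite mulr_suml [X in _ <= X]big_mkcond /=; apply: ler_sum => p _.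
  rewrite mxE; case: ifP => _; last by rewrite normr0 expr0n.
  by rewrite normrM normfV exprMn exprVn.
have [z1 bz1 hz1] := HA.2.2 q bq.
have [hD1 _] := HS z1 bz1.1.
set D1 := den z1.
have hD1' : D1 != 0 by [].
have hnum : forall p : 'I_N, (p < k)%N -> D * num z1 p 0 = D1 * num x0 p 0.
  move=> p hp; have := congr1 (fun m : 'cV[C]_N => m p 0) hz1.
  rewrite phiE -/D1 => e.
  have e' : q p 0 = num x0 p 0 / D by rewrite /q mxE hp.
  rewrite e' in e.
  have -> : num z1 p 0 = D1 * (D1^-1 * num z1 p 0) by rewrite mulrA mulfV // mul1r.
  by rewrite e; field.
set q2 := D *: z1 - D1 *: x0.
set r := D - D1.
have hAq : forall p : 'I_N, (p < k)%N -> (A *m q2) p 0 = - r * B p 0.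
  move=> p hp; rewrite mulmxBr -!scalemxAr.
  have e1 := numE z1 p; have e2 := numE x0 p; have e3 := hnum p hp.
  move: e1 e2 e3; set M1 := A *m z1; set M2 := A *m x0 => e1 e2 e3.
  clearbody M1 M2.
  rewrite !mxE.
  have -> : M1 p 0 = num z1 p 0 - B p 0 by rewrite e1 addrK.
  have -> : M2 p 0 = num x0 p 0 - B p 0 by rewrite e2 addrK.
  rewrite mulrBr e3 /r; ring.
have hiq : inner q2 Cv = - r * d.
  rewrite /q2 innerD innerN !innerZ /r /D /D1 /den; ring.
have hq2 : forall l : 'I_N, (k <= l)%N -> q2 l 0 = 0.
  by move=> l hl; rewrite !mxE (hx0 l hl) (bz1.2 l hl) !mulr0 subr0.
set S := \sum_(l < N) nsq (q2 l 0).
have hS : 0 <= S by apply: sumr_ge0 => l _; exact: nsq_ge0.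
set tau : R := (1 + S)^-1.
have htau : 0 < tau by rewrite invr_gt0; lra.
set z2 := tau%:C *: q2.
have bz2 : ballk k z2.
  split; last by move=> l hl; rewrite mxE hq2 // mulr0.
  apply/ballN_nsq.
  have -> : \sum_(j < N) nsq (z2 j 0) = tau ^+ 2 * S.
    by rewrite /S mulr_sumr; apply: eq_bigr => j _; rewrite mxE nsqZ.
  rewrite /tau expr2 -mulrA ltr_pdivrMl; last lra.
  rewrite mulr1 ltr_pdivrMl; last lra.
  nra.
have [hdz2 _] := HS z2 bz2.1.
have edz2 : den z2 = (1 - tau%:C * r) * d.
  by rewrite /den innerZ hiq; ring.
have enz2 : forall p : 'I_N, (p < k)%N -> num z2 p 0 = (1 - tau%:C * r) * B p 0.
  move=> p hp; rewrite numE /z2 -scalemxAr mxE hAq //; ring.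
have hne : 1 - tau%:C * r != 0.
  by move: hdz2; rewrite -/(den z2) edz2 mulf_eq0 negb_or => /andP[].
have ez2 : phi z2 = phi 0.
  apply/matrixP => p j; rewrite (ord1 j).
  case: (ltnP p k) => hp.
    rewrite !phiE den0 enz2 // edz2 numE mulmx0 mxE add0r.
    have := d_neq0 => hd0; field; by rewrite hne hd0.
  by rewrite ((HA.1 z2 bz2).2 p hp) ((HA.1 0 ballk0).2 p hp).
have z20 := HA.2.1 z2 0 bz2 ballk0 ez2.
have q20 : forall l, q2 l 0 = 0.
  move=> l; have := congr1 (fun m : 'cV[C]_N => m l 0) z20.
  rewrite !mxE => /eqP; rewrite mulf_eq0 => /orP[|/eqP //].
  move=> /eqP h; have h' : tau = 0 by apply: complexI; rewrite h.
  by move: htau; rewrite h' ltxx.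
have q2e : q2 = 0 by apply/matrixP => l j; rewrite (ord1 j) q20 mxE.
have r0 : r = 0.
  move: hiq; rewrite q2e inner0 => /eqP; rewrite eq_sym mulf_eq0 oppr_eq0.
  by case/orP => /eqP // hd0; move: d_neq0; rewrite hd0 eqxx.
have ex : z1 = x0.
  apply/matrixP => l j; rewrite (ord1 j).
  have := q20 l; rewrite !mxE.
  have -> : D1 = D by move: r0; rewrite /r => /eqP; rewrite subr_eq0 => /eqP.
  rewrite -mulrBr => /eqP; rewrite mulf_eq0 (negbTE hD) /= subr_eq0 => /eqP //.
by apply: nb; rewrite -ex; exact: bz1.1.
Qed.

Definition lf (a b : C) : R := complex.Re a * complex.Re b + complex.Im a * complex.Im b.
Definition Qf (a b c : C) (t : R) : R := (complex.Re b + t * complex.Re c)^+2 + (complex.Im b + t * complex.Im c)^+2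
   + 2 * (complex.Re a * complex.Re c + complex.Im a * complex.Im c).
Definition Kf (a b c : C) : R := 2 * (complex.Re b ^+2 + complex.Re c ^+2 + complex.Im b ^+2 + complex.Im c ^+2)
   + (complex.Re a ^+2 + complex.Re c ^+2 + complex.Im a ^+2 + complex.Im c ^+2).
Lemma nsq_exp (a b c : C) (t : R) : nsq (a + t%:C * b + (t^+2)%:C * c) = nsq a + 2 * t * lf a b + t^+2 * Qf a b c t.
Proof. by rewrite nsq_expand. Qed.
Lemma QKb (a b c : C) (t : R) : t^+2 <= 1 -> - Kf a b c <= Qf a b c t /\ Qf a b c t <= Kf a b c.
Proof. move=> ht; have /= := @Qbound R (complex.Re a) (complex.Im a) (complex.Re b) (complex.Im b) (complex.Re c) (complex.Im c) t ht. by []. Qed.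

Lemma sum3 (P : pred 'I_N) (f g h : 'I_N -> R) (t : R) :
  \sum_(p | P p) (f p + 2 * t * g p + t^+2 * h p) = \sum_(p | P p) f p + 2 * t * \sum_(p | P p) g p + t^+2 * \sum_(p | P p) h p.
Proof. by rewrite !big_split /= -!mulr_sumr. Qed.
Lemma Kf_ge0 a b c : 0 <= Kf a b c.
Proof.
rewrite /Kf.
set u1 := complex.Re a; set u2 := complex.Im a; set v1 := complex.Re b; set v2 := complex.Im b; set w1 := complex.Re c; set w2 := complex.Im c.
have := sqr_ge0 u1; have := sqr_ge0 u2; have := sqr_ge0 v1; have := sqr_ge0 v2; have := sqr_ge0 w1; have := sqr_ge0 w2.
lra.
Qed.
Definition Lre (x0 y : 'cV[C]_N) : R := lf (den x0) (inner y Cv) - \sum_(p < N | (p < k)%N) lf (num x0 p 0) ((A *m y) p 0).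

Lemma FO (x0 y : 'cV[C]_N) : Phi x0 <= 0 ->
  (forall t : R, 0 < `|t| < 1 -> ballN ((1 - t^+2)%:C *: x0 + t%:C *: y)) -> Lre x0 y = 0.
Proof.
move=> hP hb.
pose xt (t : R) := (1 - t^+2)%:C *: x0 + t%:C *: y.
have e1 : forall t : R, (1 - t^+2)%:C = 1 - (t^+2)%:C :> C by move=> t; rewrite rmorphB rmorph1.
have edt : forall t, den (xt t) = den x0 + t%:C * inner y Cv + (t^+2)%:C * (- inner x0 Cv).
  by move=> t; rewrite /den /xt innerD !innerZ e1; ring.
have ent : forall t p, num (xt t) p 0 = num x0 p 0 + t%:C * (A *m y) p 0 + (t^+2)%:C * (- (A *m x0) p 0).
  move=> t p; rewrite !numE /xt mulmxDr -!scalemxAr.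
  move: (A *m x0) (A *m y) => M1 M2; rewrite !mxE e1; ring.
pose M := Kf (den x0) (inner y Cv) (- inner x0 Cv) + \sum_(p < N | (p < k)%N) Kf (num x0 p 0) ((A *m y) p 0) (- (A *m x0) p 0).
apply: (@fo R (Phi x0) (Lre x0 y) M (fun t => Phi (xt t)) hP).
- by rewrite /M addr_ge0 ?Kf_ge0 // sumr_ge0 // => p _; exact: Kf_ge0.
- by move=> t ht; apply: F1; exact: hb.
move=> t ht.
have ht2 : t^+2 <= 1.
  have : `|t|^+2 <= 1 by rewrite expr_le1 // ltW.
  by rewrite real_normK // num_real.
have -> : Phi (xt t) = Phi x0 + 2 * Lre x0 y * t + t^+2 * (Qf (den x0) (inner y Cv) (- inner x0 Cv) t
   - \sum_(p < N | (p < k)%N) Qf (num x0 p 0) ((A *m y) p 0) (- (A *m x0) p 0) t).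
  rewrite /Phi edt nsq_exp.
  under eq_bigr => p _ do rewrite ent nsq_exp.
  rewrite sum3 /Lre; ring.
rewrite lerD2l; apply: ler_wpM2l; first exact: sqr_ge0.
rewrite /M; apply: lerD.
  by case: (QKb (den x0) (inner y Cv) (- inner x0 Cv) t ht2).
rewrite -sumrN; apply: ler_sum => p _; rewrite lerNl.
by case: (QKb (num x0 p 0) ((A *m y) p 0) (- (A *m x0) p 0) t ht2).
Qed.

Definition ev (i : 'I_N) : 'cV[C]_N := \col_l ((l == i)%:R).
Lemma sum_ev (f : 'I_N -> C) (i : 'I_N) (a : C) : \sum_l f l * (a * (l == i)%:R) = a * f i.
Proof.
rewrite (bigD1 i) //= eqxx big1 ?addr0 => [|l /negbTE ->]; by rewrite ?mulr1 ?mulr0 // mulrC.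
Qed.
Lemma sum_ev2 (f : 'I_N -> C) (i j : 'I_N) (a b : C) :
  \sum_l f l * (a * (l == i)%:R + b * (l == j)%:R) = a * f i + b * f j.
Proof. by rewrite -!sum_ev -big_split /=; apply: eq_bigr => l _; rewrite mulrDr. Qed.
Lemma nsq_ev2 (i j : 'I_N) (a b : C) : i != j ->
  \sum_l nsq (a * (l == i)%:R + b * (l == j)%:R) = nsq a + nsq b.
Proof.
move=> hij; rewrite (bigD1 i) //= (bigD1 j) 1?eq_sym //= big1.
- by rewrite !eqxx (eq_sym j i) (negbTE hij) !mulr1 !mulr0 addr0 add0r addr0.
move=> l /andP[hl1 hl2]; by rewrite (negbTE hl1) (negbTE hl2) !mulr0 addr0 nsq0.
Qed.
Lemma Re_sum (P : pred 'I_N) (F : 'I_N -> C) :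
  complex.Re (\sum_(p | P p) F p) = \sum_(p | P p) complex.Re (F p).
Proof. by apply: (big_morph _ (id1 := 0)) => //; case=> ? ? [? ?]. Qed.
Lemma lfE a b : lf a b = complex.Re (conjc a * b).
Proof. case: a b => [a1 a2] [b1 b2]; rewrite /lf /=; ring. Qed.

Lemma inner_ev j : inner (ev j) Cv = conjc (Cv j 0).
Proof.
rewrite /inner; under eq_bigr => l _ do rewrite mxE mulrC -[(l == j)%:R]mul1r.
by rewrite sum_ev mul1r.
Qed.
Lemma A_ev j p : (A *m ev j) p 0 = A p j.
Proof.
rewrite mxE; under eq_bigr => l _ do rewrite mxE -[(l == j)%:R]mul1r.
by rewrite sum_ev mul1r.
Qed.
Definition Lam (x0 : 'cV[C]_N) (j : 'I_N) : C :=
  conjc (den x0) * conjc (Cv j 0) - \sum_(p < N | (p < k)%N) conjc (num x0 p 0) * A p j.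
Lemma ReB (a b : C) : complex.Re (a - b) = complex.Re a - complex.Re b.
Proof. by case: a b => ? ? [? ?]. Qed.
Lemma LreE x0 (w : C) j : Lre x0 (w *: ev j) = complex.Re (w * Lam x0 j).
Proof.
rewrite /Lre /Lam innerZ inner_ev lfE.
under eq_bigr => p _ do rewrite -scalemxAr [X in lf _ X]mxE A_ev lfE.
rewrite mulrBr mulr_sumr ReB Re_sum; congr (complex.Re _ - _).
  by rewrite mulrCA.
by apply: eq_bigr => p _; rewrite mulrCA.
Qed.
Lemma Lam0 x0 j : (forall w : C, nsq w = 1 -> Lre x0 (w *: ev j) = 0) -> Lam x0 j = 0.
Proof.
move=> h; have h1 := h 1; have h2 := h 'i.
have n1 : nsq (1 : C) = 1 by rewrite /nsq /= expr0n expr1n addr0.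
have ni : nsq ('i : C) = 1 by rewrite /nsq /= expr0n expr1n add0r.
move: h1 h2 => /(_ n1) h1 /(_ ni) h2.
rewrite !LreE mul1r in h1 h2.
move: h1 h2; case: (Lam x0 j) => a b /= h1 h2.
have hb : b = 0 by move: h2; rewrite mul0r mul1r sub0r => /eqP; rewrite oppr_eq0 => /eqP.
by rewrite h1 hb.
Qed.

Lemma nsq_ev1 (i : 'I_N) (a : C) : \sum_l nsq (a * (l == i)%:R) = nsq a.
Proof.
rewrite (bigD1 i) //= eqxx mulr1 big1 ?addr0 // => l /negbTE ->; by rewrite mulr0 nsq0.
Qed.
Lemma Lam_zero (i j : 'I_N) (s : C) : (i < k)%N -> (k <= j)%N -> nsq s = 1 ->
  Lam (s *: ev i) j = 0.
Proof.
move=> hi hj hs; apply: Lam0 => w hw.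
have hij : i != j by apply/eqP => e; move: hi; rewrite e ltnNge hj.
apply: FO.
  apply: PhiA.
    move=> l hl; rewrite !mxE.
    have /negbTE -> : l != i by apply/eqP => e; move: hi; rewrite -e ltnNge hl.
    by rewrite mulr0.
  move/ballN_nsq; under eq_bigr => l _ do rewrite !mxE.
  by rewrite nsq_ev1 hs ltxx.
move=> t /andP[ht0 ht1]; apply/ballN_nsq.
under eq_bigr => l _ do rewrite !mxE !mulrA.
rewrite nsq_ev2 // !nsqZ hs hw !mulr1.
have h2 : 0 < t^+2 by rewrite -real_normK ?num_real // exprn_gt0.
have h3 : t^+2 < 1 by rewrite -real_normK ?num_real // expr_lt1.
nra.
Qed.

Definition L0 (j : 'I_N) : C := conjc d * conjc (Cv j 0) - \sum_(p < N | (p < k)%N) conjc (B p 0) * A p j.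
Definition L1 (i j : 'I_N) : C := Cv i 0 * conjc (Cv j 0) - \sum_(p < N | (p < k)%N) conjc (A p i) * A p j.
Lemma Lam_split i j s : Lam (s *: ev i) j = L0 j + conjc s * L1 i j.
Proof.
rewrite /Lam /L0 /L1 /den innerZ inner_ev.
under eq_bigr => p _ do rewrite numE -scalemxAr [X in conjc (X + _)]mxE A_ev rmorphD rmorphM mulrDl.
rewrite big_split /= rmorphD rmorphM /= conjcK.
under [X in _ - (X + _) = _]eq_bigr => p _ do rewrite -mulrA.
rewrite -mulr_sumr.
set S1 := \sum_(i0 < N | (i0 < k)%N) _. set S2 := \sum_(i0 < N | (i0 < k)%N) _.
ring.
Qed.

Lemma nsqR (x : R) : nsq (x%:C) = x ^+ 2.
Proof. by rewrite /nsq /= expr0n addr0. Qed.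
Lemma colj (j : 'I_N) : (k <= j)%N -> Cv j 0 = 0 /\ forall p : 'I_N, (p < k)%N -> A p j = 0.
Proof.
move=> hj.
have hL : forall i : 'I_N, (i < k)%N -> L0 j = 0 /\ L1 i j = 0.
  move=> i hi.
  have h1 := Lam_zero i j 1 hi hj.
  have h2 := Lam_zero i j (-1) hi hj.
  rewrite Lam_split in h1; rewrite Lam_split in h2.
  have n1 : nsq (1 : C) = 1 by rewrite /nsq /= expr0n expr1n addr0.
  have n2 : nsq (-1 : C) = 1 by rewrite /nsq /= oppr0 expr0n sqrrN expr1n addr0.
  move: (h1 n1) (h2 n2); rewrite rmorphN1 rmorph1 mul1r mulN1r => e1 e2.
  have ea : L0 j = - L1 i j by apply/eqP; rewrite -addr_eq0 e1.
  have eb : L0 j = L1 i j by apply/eqP; rewrite -subr_eq0 e2.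
  have e3 : L1 i j *+ 2 = 0 by rewrite mulr2n -{1}eb ea addNr.
  have e4 : L1 i j = 0 by apply/eqP; move: e3 => /eqP; rewrite mulrn_eq0.
  by split; rewrite // eb e4.
have k0 : (0 < k)%N by case/andP: hk.
have kN : (0 < N)%N by case/andP: hk => h1 h2; exact: leq_trans h1 h2.
have [hL0 _] := hL (Ordinal kN) k0.
have hL1 : forall i : 'I_N, (i < k)%N -> L1 i j = 0 by move=> i hi; case: (hL i hi).
have c0 : \sum_(p < N | (p < k)%N) conjc (A p j) * B p 0 = d * Cv j 0.
  move: hL0; rewrite /L0 => /eqP; rewrite subr_eq0 => /eqP /(congr1 conjc).
  rewrite rmorphM rmorph_sum /= !conjcK => ->.
  by apply: eq_bigr => p _; rewrite rmorphM /= conjcK mulrC.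
have c1 : forall i : 'I_N, (i < k)%N -> \sum_(p < N | (p < k)%N) conjc (A p j) * A p i = conjc (Cv i 0) * Cv j 0.
  move=> i hi; move: (hL1 i hi); rewrite /L1 => /eqP; rewrite subr_eq0 => /eqP /(congr1 conjc).
  rewrite rmorphM rmorph_sum /= !conjcK => ->.
  by apply: eq_bigr => p _; rewrite rmorphM /= conjcK mulrC.
have key : forall z, ballk k z -> \sum_(p < N | (p < k)%N) conjc (A p j) * phi z p 0 = Cv j 0.
  move=> z [bz hz]; have [hdz _] := HS z bz.
  have e : \sum_(p < N | (p < k)%N) conjc (A p j) * num z p 0 = Cv j 0 * den z.
    under eq_bigr => p _ do rewrite numE mxE mulrDr mulr_sumr.
    rewrite big_split /= c0 exchange_big /=.
    rewrite /den /inner mulrDr mulr_sumr [Cv j 0 * d]mulrC; congr (_ + _).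
    apply: eq_bigr => l _.
    case: (ltnP l k) => hl.
      have -> : Cv j 0 * (z l 0 * conjc (Cv l 0)) = (conjc (Cv l 0) * Cv j 0) * z l 0 by ring.
      rewrite -(c1 l hl) mulr_suml; apply: eq_bigr => p _; ring.
    by rewrite hz // mul0r mulr0 big1 // => p _; rewrite !mulr0.
  under eq_bigr => p _ do rewrite phiE mulrCA.
  by rewrite -mulr_sumr e mulrCA mulVf ?mulr1.
have cj : Cv j 0 = 0.
  have [z bz ez] := HA.2.2 0 ballk0.
  rewrite -(key z bz) ez big1 // => p _; by rewrite mxE mulr0.
split=> // q hq.
set w := (2^-1 : R)%:C *: ev q.
have bw : ballk k w.
  split; last first.
    move=> l hl; rewrite !mxE.
    have /negbTE -> : l != q by apply/eqP => e; move: hq; rewrite -e ltnNge hl.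
    by rewrite mulr0.
  by apply/ballN_nsq; under eq_bigr => l _ do rewrite !mxE; rewrite nsq_ev1 nsqR; lra.
have [z bz ez] := HA.2.2 w bw.
have := key z bz; rewrite ez cj (bigD1 q) //= big1 => [|p /andP[_ hpq]].
  rewrite !mxE eqxx mulr1 addr0 => /eqP; rewrite mulf_eq0 conjc_eq0 => /orP[/eqP //|].
  move=> /eqP h; have h' : (2^-1 : R) = 0 by apply: complexI; rewrite h.
  by move/eqP: h'; rewrite invr_eq0 pnatr_eq0.
by rewrite !mxE (negbTE hpq) mulr0 mulr0.
Qed.

Lemma lowblock (l : 'I_N) : (k <= l)%N -> B l 0 = 0 /\ forall i : 'I_N, (i < k)%N -> A l i = 0.
Proof.
move=> hl.
have hn : forall z, ballk k z -> num z l 0 = 0.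
  move=> z bz; have [hdz _] := HS z bz.1.
  have := (HA.1 z bz).2 l hl; rewrite phiE => /eqP; rewrite mulf_eq0 invr_eq0 (negbTE hdz) /=.
  by move/eqP.
have hB : B l 0 = 0 by have := hn 0 ballk0; rewrite numE mulmx0 mxE add0r.
split=> // i hi.
set w := (2^-1 : R)%:C *: ev i.
have bw : ballk k w.
  split; last first.
    move=> l' hl'; rewrite !mxE.
    have /negbTE -> : l' != i by apply/eqP => e; move: hi; rewrite -e ltnNge hl'.
    by rewrite mulr0.
  by apply/ballN_nsq; under eq_bigr => l' _ do rewrite !mxE; rewrite nsq_ev1 nsqR; lra.
have := hn w bw; rewrite numE hB addr0 /w -scalemxAr mxE A_ev => /eqP.
rewrite mulf_eq0 => /orP[|/eqP //].
move=> /eqP h; have h' : (2^-1 : R) = 0 by apply: complexI; rewrite h.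
by move/eqP: h'; rewrite invr_eq0 pnatr_eq0.
Qed.
End M.

Lemma fcd (R : realType) (N k : nat) (M : 'M[R[i]]_N) (B' C' : 'cV[R[i]]_N) (d' : R[i]) :
  (forall i l : 'I_N, (i < k)%N -> (k <= l)%N -> M i l = 0) ->
  (forall l : 'I_N, (k <= l)%N -> C' l 0 = 0) ->
  first_coords_dep k (lfmap M B' C' d').
Proof.
move=> hM hC z w _ _ hzw i hi.
rewrite /lfmap !mxE /inner.
have e1 : \sum_(j < N) z j 0 * conjc (C' j 0) = \sum_(j < N) w j 0 * conjc (C' j 0).
  apply: eq_bigr => l _.
  by case: (ltnP l k) => hl; [rewrite hzw | rewrite hC // rmorph0 !mulr0].
have e2 : \sum_j M i j * z j 0 = \sum_j M i j * w j 0.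
  apply: eq_bigr => l _.
  by case: (ltnP l k) => hl; [rewrite hzw | rewrite hM // !mul0r].
by rewrite e1 e2.
Qed.

Local Close Scope complex_scope.

Theorem lemma4p2 (R : realType) (N k : nat) (A : 'M[R[i]]_N)
  (B C : 'cV[R[i]]_N) (d : R[i]) :
  (1 <= k <= N)%N ->
  lf_selfmap A B C d ->
  restr_aut k (lfmap A B C d) ->
  first_coords_dep k (lfmap A B C d) /\ first_coords_dep k (lfadj A B C d).
Proof.
move=> hk HS HA; split.
  apply: fcd.
    by move=> i l hi hl; exact: ((@colj R N k A B C d hk HS HA l hl).2 i hi).
  by move=> l hl; exact: (@colj R N k A B C d hk HS HA l hl).1.
rewrite /lfadj; apply: fcd.
  move=> i l hi hl; rewrite /adjmx !mxE.
  by rewrite ((@lowblock R N k A B C d HS HA l hl).2 i hi) rmorph0.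
by move=> l hl; rewrite !mxE ((@lowblock R N k A B C d HS HA l hl).1) oppr0.
Qed.
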